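(* Let $S$ be a right LCM monoid, and let $F_1,F_2$ be accurate foundation sets for $S$. Then for every unital $*$-homomorphism $\pi$ from $C^*(S)$ into a unital $C^*$-algebra, the following are equivalent: (1) $\sum_{f\in F_1}\pi(e_{fS})=1$ and $\sum_{f\in F_2}\pi(e_{fS})=1$; (2) $\sum_{f\in F_1\cdot F_2}\pi(e_{fS})=1$, where $F_1\cdot F_2=\{st\mid s\in F_1,t\in F_2\}$. (That is, the boundary relation $\sum_{f\in F}e_{fS}=1$ for both $F_1$ and $F_2$ is equivalent to the boundary relation for $F_1\cdot F_2$.)
   Context: A right LCM monoid is a countable discrete monoid $S$ that is left cancellative and such that for all $s,t\in S$ the intersection $sS\cap tS$ is either empty or equal to $rS$ for some $r\in S$. A finite subset $F\subset S$ is a foundation set if for every $t\in S$ there is $s\in F$ with $sS\cap tS\neq\emptyset$; it is accurate if $fS\cap f'S=\emptyset$ for distinct $f,f'\in F$. The full semigroup $C^*$-algebra $C^*(S)$ (in the sense of Li) is the universal $C^*$-algebra generated by isometries $\{v_s: s\in S\}$ and projections $\{e_X : X\in\mathcal{J}(S)\}$, where $\mathcal{J}(S)=\{\emptyset\}\cup\{sS: s\in S\}$, subject to $v_{st}=v_sv_t$, $v_se_Xv_s^*=e_{sX}$, $e_S=1$, $e_\emptyset=0$, $e_Xe_Y=e_{X\cap Y}$; in particular $e_{sS}=v_sv_s^*$. *)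

(* Defs.v *)
From HB Require Import structures.
From mathcomp Require Import all_boot all_order all_algebra.
From mathcomp Require Import finmap.
From mathcomp Require Import complex.
From mathcomp Require Import boolp classical_sets reals.
Set Implicit Arguments. Unset Strict Implicit. Unset Printing Implicit Defensive.
Import Order.TTheory GRing.Theory Num.Theory.

Local Open Scope classical_set_scope.
Local Open Scope ring_scope.

Section Monoid.
Variables (S : choiceType) (mul : S -> S -> S) (one : S).

Definition pideal (s : S) : set S := range (mul s).

Definition lmul_set (s : S) (X : set S) : set S := mul s @` X.

Definition JS (X : set S) : Prop := X = set0 \/ exists s, X = pideal s.

Record is_rightLCM : Prop := {
  mulA : forall s t u, mul s (mul t u) = mul (mul s t) u;
  mul1s : forall s, mul one s = s;
  muls1 : forall s, mul s one = s;
  lcancel : forall s t u, mul s t = mul s u -> t = u;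
  lcm : forall s t, pideal s `&` pideal t = set0 \/
                    exists r, pideal s `&` pideal t = pideal r }.

Definition foundation (F : {fset S}) : Prop :=
  forall t : S, exists2 s, s \in F & pideal s `&` pideal t <> set0.

Definition accurate (F : {fset S}) : Prop :=
  forall f f', f \in F -> f' \in F -> f <> f' -> pideal f `&` pideal f' = set0.
End Monoid.

Record is_Cstar (R : realType) (A : algType R[i]) (star : A -> A) (nrm : A -> R)
  : Prop := {
  star_add : forall a b, star (a + b) = star a + star b;
  star_scale : forall (c : R[i]) a, star (c *: a) = (c^*)%C *: star a;
  star_mul : forall a b, star (a * b) = star b * star a;
  star_invol : forall a, star (star a) = a;
  nrm_ge0 : forall a, 0 <= nrm a;
  nrm_eq0 : forall a, nrm a = 0 -> a = 0;
  nrm_add : forall a b, nrm (a + b) <= nrm a + nrm b;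
  nrm_scale : forall (c : R[i]) a, nrm (c *: a) = Normc.normc c * nrm a;
  nrm_mul : forall a b, nrm (a * b) <= nrm a * nrm b;
  nrm_cstar : forall a, nrm (star a * a) = nrm a ^+ 2;
  nrm_complete : forall u : nat -> A,
    (forall e : R, 0 < e -> exists N, forall m n, (N <= m)%N -> (N <= n)%N ->
        nrm (u m - u n) < e) ->
    exists l : A, forall e : R, 0 < e -> exists N, forall n, (N <= n)%N ->
        nrm (u n - l) < e }.

(* By the universal property of Li's full semigroup C*-algebra C*(S), a unital
   *-homomorphism pi : C*(S) -> A is the same thing as a family
   V s = pi(v_s) (isometries), E X = pi(e_X) (projections, X in J(S))
   in A satisfying the defining relations. *)
Record is_Cstar_rep (S : choiceType) (mul : S -> S -> S) (R : realType)
  (A : algType R[i]) (star : A -> A) (V : S -> A) (E : set S -> A) : Prop := {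
  rep_isom : forall s, star (V s) * V s = 1;
  rep_proj : forall X, JS mul X -> star (E X) = E X /\ E X * E X = E X;
  rep_mul : forall s t, V (mul s t) = V s * V t;
  rep_conj : forall s X, JS mul X -> V s * E X * star (V s) = E (lmul_set mul s X);
  rep_top : E setT = 1;
  rep_bot : E set0 = 0;
  rep_cap : forall X Y, JS mul X -> JS mul Y -> E X * E Y = E (X `&` Y) }.

Definition fset_prod (S : choiceType) (mul : S -> S -> S) (F1 F2 : {fset S})
  : {fset S} := [fset mul s t | s in F1, t in F2]%fset.

(* Main.v *)
Require Import Defs.
From HB Require Import structures.
From mathcomp Require Import all_boot all_order all_algebra.
From mathcomp Require Import finmap.
From mathcomp Require Import complex.
From mathcomp Require Import boolp classical_sets reals.
Import Order.TTheory GRing.Theory Num.Theory.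
Local Open Scope ring_scope.
Theorem lemma2p3 (S : countType) (mul : S -> S -> S) (one : S)
  (HS : is_rightLCM mul one)
  (F1 F2 : {fset S})
  (fF1 : foundation mul F1) (aF1 : accurate mul F1)
  (fF2 : foundation mul F2) (aF2 : accurate mul F2)
  (R : realType) (A : algType R[i]) (star : A -> A) (nrm : A -> R)
  (HA : is_Cstar star nrm)
  (V : S -> A) (E : classical_sets.set S -> A)
  (Hpi : is_Cstar_rep mul star V E) :
  (\sum_(f <- F1) E (pideal mul f) = 1 /\ \sum_(f <- F2) E (pideal mul f) = 1)
  <-> \sum_(f <- fset_prod mul F1 F2) E (pideal mul f) = 1.
Proof.
case: HS => mA m1s ms1 lc _.
case: Hpi => iso proj rmul conj top bot cap.
have JSp : forall s, JS mul (pideal mul s) by move=> s; right; exists s.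
have pT : pideal mul one = setT.
  by apply/seteqP; split => x //= _; exists x => //; exact: m1s.
have eE : forall s, E (pideal mul s) = V s * star (V s).
  move=> s; have JT : JS mul setT by right; exists one.
  by have := conj s setT JT; rewrite top mulr1 => <-.
have orth : forall s s', s \in F1 -> s' \in F1 -> s <> s' -> star (V s) * V s' = 0.
  move=> s s' sF s'F ss'.
  have -> : star (V s) * V s' = star (V s) * (E (pideal mul s) * E (pideal mul s')) * V s'.
    by rewrite !eE !mulrA iso mul1r -!mulrA iso mulr1.
  by rewrite cap // aF1 // bot mulr0 mul0r.
have red : forall s (X : S -> A), s \in F1 ->
   \sum_(s' <- F1) star (V s) * V s' * X s' = X s.
  move=> s X sF; rewrite (big_fsetD1 s) //= iso mul1r big1_fset ?addr0 //.
  move=> s'; rewrite !inE => /andP[ns s'F] _.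
  by rewrite orth // ?mul0r // => E'; rewrite E' eqxx in ns.
have prodE : \sum_(f <- fset_prod mul F1 F2) E (pideal mul f) =
    \sum_(s <- F1) V s * (\sum_(t <- F2) E (pideal mul t)) * star (V s).
  rewrite /fset_prod big_imfset2 /=; last first.
    move=> [s t] [s' t']; rewrite !inE /= => /andP[sF tF] /andP[s'F t'F] /= e.
    have ss' : s = s'.
      apply: contra_notP (fun h => h) => ns.
      have := aF1 _ _ sF s'F ns; move/seteqP => [+ _] => /(_ (mul s t)).
      by apply; split; [exists t | exists t'].
    by subst s'; have := lc _ _ _ e => ->.
  apply: eq_bigr => s _; rewrite mulr_sumr mulr_suml; apply: eq_bigr => t _.
  by rewrite !eE rmul (star_mul HA) !mulrA.
rewrite prodE; split.
  case=> h1 h2; rewrite -[RHS]h1; apply: eq_bigr => s _.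
  by rewrite h2 mulr1 eE.
move=> hQ; have [s0 s0F _] := fF1 one.
set P2 := \sum_(t <- F2) E (pideal mul t) in hQ *.
have h1 : \sum_(f <- F1) E (pideal mul f) = 1.
  rewrite -[LHS]mul1r -{1}hQ mulr_suml.
  transitivity (\sum_(s <- F1) V s * P2 * star (V s)) => //.
  apply: eq_big_seq => s sF; rewrite -mulrA; congr (_ * _).
  rewrite mulr_sumr -[RHS](red s (fun s' => star (V s')) sF).
  by apply: eq_bigr => s' _; rewrite eE mulrA.
split => //.
transitivity (star (V s0) * (\sum_(s <- F1) V s * P2 * star (V s)) * V s0); last first.
  by rewrite hQ mulr1 iso.
rewrite mulr_sumr mulr_suml -[LHS]mulr1 -(iso s0) mulrA.
rewrite -(red s0 (fun s' => P2 * star (V s') * V s0) s0F).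
by apply: eq_bigr => s _; rewrite !mulrA.
Qed.
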